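(* Let either $N\ge3$ and $1<p<\frac{N}{N-2}$, or $N=2$ and $p>1$, and let $M\le-\mu^*$. Let $(x(t),y(t))$ be the trajectory associated with a regular solution of (E). Then (i) it cannot converge to $P_{1,M}$ as $t\to\infty$ with $t\mapsto x(t)$ increasing; (ii) it cannot intersect the half-line $\{y=\frac{2}{p-1}x\}$ at a point strictly between $(0,0)$ and $P_{1,M}$.
   Context: (E) denotes the ODE $-u_{rr}-\frac{N-1}{r}u_r=|u|^{p-1}u+M|u_r|^{\frac{2p}{p+1}}$ for $r>0$. A regular solution is the $C^2$ solution on a maximal interval $[0,r_0)$ with $u(0)=u_0>0$, $u_r(0)=0$; its trajectory is $t=\ln r$, $x(t)=r^{\frac{2}{p-1}}u(r)$, $y(t)=-r^{\frac{p+1}{p-1}}u_r(r)$. Let $K=\frac{(N-2)p-N}{p-1}$, $\mu^*=(p+1)\left(\frac{N-(N-2)p}{2p}\right)^{\frac{p}{p+1}}$. For $M<-\mu^*$ the equation $X^{p-1}+M\left(\frac{2}{p-1}\right)^{\frac{2p}{p+1}}X^{\frac{p-1}{p+1}}-\frac{2K}{p-1}=0$ has two positive roots $X_{1,M}<X_{2,M}$; for $M=-\mu^*$ it has a unique positive root, denoted $X_{1,M}$. $P_{1,M}=(X_{1,M},\frac{2}{p-1}X_{1,M})$. *)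

(* Defs.v *)
From Stdlib Require Import Reals.
From Coquelicot Require Import Coquelicot.
Open Scope R_scope.

(* Real power x^a, with the convention 0^a = 0 (used only with a > 0,
   where this is the usual value) and not used for x < 0. *)
Definition powp (x a : R) : R := if Rlt_dec 0 x then Rpower x a else 0.

Definition rderive (f : R -> R) (x l : R) : Prop :=
  filterlim (fun h => (f (x + h) - f x) / h) (at_right 0) (locally l).

Definition E_holds (N : nat) (p M : R) (r u0 u1 u2 : R) : Prop :=
  - u2 - (INR N - 1) / r * u1
  = powp (Rabs u0) (p - 1) * u0 + M * powp (Rabs u1) (2 * p / (p + 1)).

Definition C2_solution_on (N : nat) (p M : R) (u : R -> R) (r0 : Rbar) : Prop :=
  Rbar_lt 0 r0 /\
  exists u1 u2 : R -> R,
    (forall r, 0 < r -> Rbar_lt r r0 ->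
        is_derive u r (u1 r) /\ is_derive u1 r (u2 r) /\ continuous u2 r
        /\ E_holds N p M r (u r) (u1 r) (u2 r)) /\
    rderive u 0 (u1 0) /\ rderive u1 0 (u2 0) /\
    filterlim u2 (at_right 0) (locally (u2 0)) /\
    u1 0 = 0.

Definition regular_solution (N : nat) (p M u0 : R) (u : R -> R) (r0 : Rbar) : Prop :=
  0 < u0 /\ u 0 = u0 /\ C2_solution_on N p M u r0 /\
  (forall (v : R -> R) (r1 : Rbar), Rbar_lt r0 r1 -> C2_solution_on N p M v r1 ->
     ~ (forall r, 0 <= r -> Rbar_lt r r0 -> v r = u r)).

(* Trajectory: t = ln r, x(t) = r^(2/(p-1)) u(r), y(t) = -r^((p+1)/(p-1)) u_r(r). *)
Definition traj_x (p : R) (u : R -> R) (t : R) : R :=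
  powp (exp t) (2 / (p - 1)) * u (exp t).
Definition traj_y (p : R) (u : R -> R) (t : R) : R :=
  - (powp (exp t) ((p + 1) / (p - 1)) * Derive u (exp t)).

Definition Kc (N : nat) (p : R) : R := ((INR N - 2) * p - INR N) / (p - 1).
Definition mu_star (N : nat) (p : R) : R :=
  (p + 1) * powp ((INR N - (INR N - 2) * p) / (2 * p)) (p / (p + 1)).

(* The function whose positive roots define X_{1,M}, X_{2,M}. *)
Definition Xeq (N : nat) (p M X : R) : R :=
  powp X (p - 1) + M * powp (2 / (p - 1)) (2 * p / (p + 1)) * powp X ((p - 1) / (p + 1))
  - 2 * Kc N p / (p - 1).

(* X is X_{1,M}: the smallest positive root (the smaller of the two roots if
   M < -mu_star, the unique one if M = -mu_star). *)
Definition is_X1 (N : nat) (p M X : R) : Prop :=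
  0 < X /\ Xeq N p M X = 0 /\ (forall Y, 0 < Y -> Xeq N p M Y = 0 -> X <= Y).

(* Main.v *)
Require Import Defs.
From Stdlib Require Import Reals Lra.
From Coquelicot Require Import Coquelicot.
Open Scope R_scope.


Lemma deriv_quot (g : R -> R) x d : is_derive g x d ->
  forall eps, 0 < eps -> exists del, 0 < del /\
   forall h, h <> 0 -> Rabs h < del -> Rabs ((g (x+h) - g x)/h - d) < eps.
Proof.
  intros Hd eps He. apply is_derive_Reals in Hd.
  destruct (Hd eps He) as [del Hdel]. exists del. split. apply cond_pos.
  intros h Hh Hh'. apply Hdel; auto.
Qed.

Lemma deriv_right_lt (g : R -> R) x d : is_derive g x d -> d < 0 ->
  exists del, 0 < del /\ forall h, 0 < h < del -> g (x+h) < g x.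
Proof.
  intros Hd Hneg. destruct (deriv_quot g x d Hd (-d/2)) as [del [Hdel H]]. lra.
  exists del; split; auto. intros h [h0 h1].
  assert (Hq := H h ltac:(lra) ltac:(rewrite Rabs_pos_eq; lra)).
  apply Rabs_def2 in Hq. destruct Hq as [Hq1 Hq2].
  assert ((g (x+h) - g x)/h < 0) by lra.
  assert (g (x+h) - g x < 0).
  { replace (g (x+h) - g x) with ((g (x+h) - g x)/h * h) by (field; lra).
    nra. }
  lra.
Qed.

Lemma deriv_right_gt (g : R -> R) x d : is_derive g x d -> 0 < d ->
  exists del, 0 < del /\ forall h, 0 < h < del -> g x < g (x+h).
Proof.
  intros Hd Hpos. destruct (deriv_quot g x d Hd (d/2)) as [del [Hdel H]]. lra.
  exists del; split; auto. intros h [h0 h1].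
  assert (Hq := H h ltac:(lra) ltac:(rewrite Rabs_pos_eq; lra)).
  apply Rabs_def2 in Hq. destruct Hq as [Hq1 Hq2].
  assert (0 < (g (x+h) - g x)/h) by lra.
  assert (0 < g (x+h) - g x).
  { replace (g (x+h) - g x) with ((g (x+h) - g x)/h * h) by (field; lra).
    nra. }
  lra.
Qed.

Lemma deriv_left_lt (g : R -> R) x d : is_derive g x d -> 0 < d ->
  exists del, 0 < del /\ forall h, 0 < h < del -> g (x-h) < g x.
Proof.
  intros Hd Hpos. destruct (deriv_quot g x d Hd (d/2)) as [del [Hdel H]]. lra.
  exists del; split; auto. intros h [h0 h1].
  assert (Hq := H (-h) ltac:(lra) ltac:(rewrite Rabs_Ropp, Rabs_pos_eq; lra)).
  apply Rabs_def2 in Hq. destruct Hq as [Hq1 Hq2].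
  replace (x + - h) with (x - h) in * by ring.
  assert (0 < (g (x-h) - g x)/(-h)) by lra.
  assert (0 < g x - g (x-h)).
  { replace (g x - g (x-h)) with ((g (x-h) - g x)/(-h) * h) by (field; lra).
    nra. }
  lra.
Qed.

Lemma cont_nbhd (g : R -> R) x : continuous g x ->
  forall eps, 0 < eps -> exists del, 0 < del /\
    forall y, Rabs (y - x) < del -> Rabs (g y - g x) < eps.
Proof.
  intros Hc eps He. apply continuity_pt_filterlim in Hc.
  destruct (Hc eps He) as [del [Hdel H]]. exists del; split; auto.
  intros y Hy. destruct (Req_dec y x) as [->|Hne].
  - rewrite Rminus_diag, Rabs_R0; auto.
  - apply (H y). split. split. exact I. auto. exact Hy.
Qed.


Lemma last_cross (g : R -> R) lo hi c : lo < hi -> c < g hi ->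
  (forall r, lo < r <= hi -> continuous g r) ->
  exists rs, lo <= rs < hi /\ (forall r, rs < r <= hi -> c < g r) /\
             (rs = lo \/ g rs = c).
Proof.
  intros Hlh Hc Hcont.
  set (E := fun r => lo <= r <= hi /\ (r = lo \/ g r <= c)).
  assert (Hb : bound E). { exists hi. intros r [Hr _]. lra. }
  assert (He : exists r, E r). { exists lo. split. lra. left; auto. }
  destruct (completeness E Hb He) as [m [Hub Hlub]].
  assert (Hlo : lo <= m). { apply Hub. split. lra. left; auto. }
  assert (Hhi : m <= hi). { apply Hlub. intros r [Hr _]. lra. }
  assert (Hright : forall r, m < r <= hi -> c < g r).
  { intros r Hr. destruct (Rlt_le_dec c (g r)) as [H|H]; auto.
    assert (E r). { split. lra. right; auto. }
    specialize (Hub r H0). lra. }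
  assert (Hmh : m < hi).
  { destruct (cont_nbhd g hi (Hcont hi ltac:(lra)) (g hi - c)) as [d [Hd Hd']]. lra.
    assert (m <= Rmax lo (hi - d)).
    { apply Hlub. intros r [Hr [Hr'|Hr']].
      - subst. apply Rmax_l.
      - destruct (Rlt_le_dec (Rabs (r - hi)) d) as [Ha|Ha].
        + specialize (Hd' r Ha). apply Rabs_def2 in Hd'. lra.
        + rewrite Rabs_left1 in Ha by lra. eapply Rle_trans; [|apply Rmax_r]. lra. }
    unfold Rmax in H; destruct (Rle_dec lo (hi - d)); lra. }
  exists m. split. lra. split. auto.
  destruct (Req_dec m lo) as [Heq|Hne]. left; auto. right.
  assert (Hm : lo < m) by lra.
  destruct (Rtotal_order (g m) c) as [Hl|[Heq|Hg]]; auto.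
  - destruct (cont_nbhd g m (Hcont m ltac:(lra)) (c - g m)) as [d [Hd Hd']]. lra.
    set (r := Rmin (m + d/2) hi).
    assert (m < r <= hi). { unfold r, Rmin; destruct (Rle_dec (m + d/2) hi); lra. }
    assert (Rabs (r - m) < d). { unfold r, Rmin; destruct (Rle_dec (m + d/2) hi); rewrite Rabs_pos_eq; lra. }
    specialize (Hd' r H0). specialize (Hright r H). apply Rabs_def2 in Hd'. lra.
  - destruct (cont_nbhd g m (Hcont m ltac:(lra)) (g m - c)) as [d [Hd Hd']]. lra.
    assert (m <= Rmax lo (m - d)).
    { apply Hlub. intros r [Hr [Hr'|Hr']].
      - subst. apply Rmax_l.
      - destruct (Rlt_le_dec (Rabs (r - m)) d) as [Ha|Ha].
        + specialize (Hd' r Ha). apply Rabs_def2 in Hd'. lra.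
        + assert (r <= m) by (apply Hub; split; [lra|right; auto]).
          rewrite Rabs_left1 in Ha by lra. eapply Rle_trans; [|apply Rmax_r]. lra. }
    unfold Rmax in H; destruct (Rle_dec lo (m - d)); lra.
Qed.

Lemma right_limit_ge (g : R -> R) x c del : continuous g x -> 0 < del ->
  (forall r, x < r < x + del -> c < g r) -> c <= g x.
Proof.
  intros Hc Hd H. destruct (Rle_lt_dec c (g x)) as [|Hl]; auto.
  destruct (cont_nbhd g x Hc (c - g x)) as [e [He He']]. lra.
  set (r := x + Rmin (e/2) (del/2)).
  assert (Rmin (e/2) (del/2) > 0) by (unfold Rmin; destruct Rle_dec; lra).
  assert (Rmin (e/2) (del/2) <= e/2) by apply Rmin_l.
  assert (Rmin (e/2) (del/2) <= del/2) by apply Rmin_r.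
  assert (Rabs (r - x) < e) by (unfold r; rewrite Rabs_pos_eq; lra).
  specialize (He' r H3). specialize (H r ltac:(unfold r; lra)).
  apply Rabs_def2 in He'. lra.
Qed.

Lemma strict_decr (g dg : R -> R) a b : a < b ->
  (forall y, a < y < b -> is_derive g y (dg y) /\ dg y < 0) ->
  (forall y, a <= y <= b -> continuous g y) -> g b < g a.
Proof.
  intros Hab Hd Hc.
  assert (pr1 : forall c, a < c < b -> derivable_pt g c).
  { intros c Hc'. exists (dg c). apply is_derive_Reals. apply (Hd c Hc'). }
  assert (pr2 : forall c, a < c < b -> derivable_pt id c).
  { intros c Hc'. apply derivable_pt_id. }
  destruct (MVT g id a b pr1 pr2 Hab) as [c [P Hm]].
  - intros c Hc'. apply continuity_pt_filterlim. apply Hc. auto.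
  - intros c Hc'. apply derivable_continuous_pt. apply derivable_pt_id.
  - rewrite (derive_pt_eq_0 g c (dg c) (pr1 c P)) in Hm.
    2:{ apply is_derive_Reals. apply (Hd c P). }
    rewrite (derive_pt_eq_0 id c 1 (pr2 c P)) in Hm.
    2:{ apply derivable_pt_lim_id. }
    unfold id in Hm. destruct (Hd c P) as [_ Hn].
    assert (g b - g a = dg c * (b - a)) by lra. nra.
Qed.

Lemma strict_incr (g dg : R -> R) a b : a < b ->
  (forall y, a < y < b -> is_derive g y (dg y) /\ 0 < dg y) ->
  (forall y, a <= y <= b -> continuous g y) -> g a < g b.
Proof.
  intros Hab Hd Hc.
  assert (H := strict_decr (fun y => - g y) (fun y => - dg y) a b Hab).
  enough (- g b < - g a) by lra. apply H.
  - intros y Hy. destruct (Hd y Hy). split. simpl. apply (is_derive_opp g y (dg y)); auto. lra.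
  - intros y Hy. apply (continuous_opp g y). auto.
Qed.

Lemma rderive_cont (f : R -> R) l : rderive f 0 l ->
  forall eps, 0 < eps -> exists del, 0 < del /\
    forall h, 0 < h < del -> Rabs (f h - f 0) < eps.
Proof.
  intros Hd eps He. unfold rderive in Hd.
  assert (Hd1 : at_right 0 (fun h => ball l 1 ((f (0+h) - f 0)/h))).
  { apply Hd. apply (locally_ball l (mkposreal 1 Rlt_0_1)). }
  destruct Hd1 as [d Hd'].
  set (del := Rmin d (eps / (Rabs l + 1))).
  assert (Hl : 0 < Rabs l + 1) by (pose proof (Rabs_pos l); lra).
  assert (0 < eps / (Rabs l + 1)) by (apply Rdiv_lt_0_compat; lra).
  exists del. split. unfold del, Rmin; destruct Rle_dec; [apply cond_pos|lra].
  intros h [h0 h1].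
  assert (Hb : ball 0 d h).
  { unfold ball; simpl; unfold AbsRing_ball, abs, minus, plus, opp; simpl.
    replace (h + - 0) with h by ring. rewrite Rabs_pos_eq by lra.
    unfold del in h1. pose proof (Rmin_l d (eps / (Rabs l + 1))). lra. }
  specialize (Hd' h Hb h0). simpl in Hd'.
  unfold ball in Hd'; simpl in Hd'; unfold AbsRing_ball, abs, minus, plus, opp in Hd'; simpl in Hd'.
  replace (0 + h) with h in Hd' by ring.
  apply Rabs_def2 in Hd'. destruct Hd' as [A B].
  assert (hl : h < eps / (Rabs l + 1)) by (unfold del in h1; pose proof (Rmin_r d (eps / (Rabs l + 1))); lra).
  assert (Hq : Rabs ((f h - f 0)/h) < Rabs l + 1).
  { apply Rabs_def1; pose proof (Rabs_pos l); destruct (Rabs_def2 l (Rabs l + 1/2)) ; try (apply Rabs_def1; [|]); 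
    try (pose proof (Rle_abs l); pose proof (Rle_abs (-l)); rewrite Rabs_Ropp in *; lra); lra. }
  replace (f h - f 0) with ((f h - f 0)/h * h) by (field; lra).
  rewrite Rabs_mult, (Rabs_pos_eq h) by lra.
  apply Rle_lt_trans with ((Rabs l + 1) * h). apply Rmult_le_compat_r; lra.
  replace eps with ((Rabs l + 1) * (eps / (Rabs l + 1))) by (field; lra).
  apply Rmult_lt_compat_l; lra.
Qed.


Definition aa p := 2/(p-1).
Definition ss p := (p+1)/2.
Definition qq p := 2*p/(p+1).
Definition kk N p := (INR N - (INR N - 2)*p)/(p-1).
Definition Ef N p M z := 1 + M * Rpower z (qq p) + (kk N p / aa p) * z^2.
Definition Hf p M z := 1 + M * Rpower z (qq p) + ss p * z^2.

Lemma Rpower_pos x y : 0 < Rpower x y.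
Proof. unfold Rpower. apply exp_pos. Qed.

Lemma Rpower_2 x : 0 < x -> Rpower x 2 = x^2.
Proof. intros. replace 2 with (INR 2) by (simpl; lra). apply Rpower_pow; auto. Qed.

Lemma powp_pos x y : 0 < x -> powp x y = Rpower x y.
Proof. intros. unfold powp. destruct Rlt_dec; [auto|lra]. Qed.

Lemma aa_pos p : 1 < p -> 0 < aa p.
Proof. intros. unfold aa. apply Rdiv_lt_0_compat; lra. Qed.

Lemma Xeq_E N p M z : 1 < p -> 0 < z ->
  Xeq N p M (Rpower (aa p / z) (aa p)) = (aa p / z)^2 * Ef N p M z.
Proof.
  intros Hp Hz. pose proof (aa_pos p Hp) as Ha.
  set (b := aa p / z). assert (Hb : 0 < b) by (unfold b; apply Rdiv_lt_0_compat; lra).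
  unfold Xeq, Ef. rewrite !powp_pos; try apply Rpower_pos; try (apply Rdiv_lt_0_compat; lra).
  rewrite !Rpower_mult.
  replace (aa p * (p - 1)) with 2 by (unfold aa; field; lra).
  replace (aa p * ((p-1)/(p+1))) with (2 + - qq p) by (unfold aa, qq; field; lra).
  rewrite Rpower_plus, Rpower_Ropp, Rpower_2 by auto.
  replace (2/(p-1)) with (b * z) by (unfold b, aa; field; lra).
  rewrite <- Rpower_mult_distr by auto.
  replace (2/(p-1)) with (aa p) by reflexivity.
  assert (0 < Rpower b (qq p)) by apply Rpower_pos.
  change (2*p/(p+1)) with (qq p).
  set (B := Rpower b (qq p)) in *. set (Zq := Rpower z (qq p)).
  unfold Kc, kk, b, aa. field. repeat split; lra.
Qed.


Definition W1 p X1 := Rpower X1 ((p-1)/2).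
Definition lam p X1 := aa p / W1 p X1.

Lemma lam_pos p X1 : 1 < p -> 0 < lam p X1.
Proof. intros. unfold lam. apply Rdiv_lt_0_compat. apply aa_pos; auto. apply Rpower_pos. Qed.

Lemma X_lam p X1 : 1 < p -> 0 < X1 -> Rpower (aa p / lam p X1) (aa p) = X1.
Proof.
  intros Hp HX. unfold lam. replace (aa p / (aa p / W1 p X1)) with (W1 p X1).
  2:{ pose proof (aa_pos p Hp). pose proof (Rpower_pos X1 ((p-1)/2)). unfold W1 in *. field. lra. }
  unfold W1. rewrite Rpower_mult. replace ((p-1)/2 * aa p) with 1 by (unfold aa; field; lra).
  apply Rpower_1; auto.
Qed.

Lemma E_lam N p M X1 : 1 < p -> is_X1 N p M X1 -> Ef N p M (lam p X1) = 0.
Proof.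
  intros Hp [HX [Hr _]]. pose proof (lam_pos p X1 Hp).
  pose proof (Xeq_E N p M (lam p X1) Hp H). rewrite X_lam in H0 by auto.
  rewrite Hr in H0. pose proof (aa_pos p Hp).
  assert (0 < (aa p / lam p X1)^2). { apply pow_lt. apply Rdiv_lt_0_compat; lra. }
  symmetry in H0. apply Rmult_integral in H0. destruct H0; [lra|auto].
Qed.

Lemma Ef_deriv N p M z : 0 < z -> ex_derive (Ef N p M) z.
Proof. intros. unfold Ef, Rpower. auto_derive. auto. Qed.

Lemma Ef_cont N p M z : 0 < z -> continuity_pt (Ef N p M) z.
Proof. intros. apply continuity_pt_filterlim. apply (ex_derive_continuous (Ef N p M)). apply Ef_deriv; auto. Qed.

Lemma E_pos N p M X1 : 1 < p -> 0 < kk N p -> is_X1 N p M X1 ->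
  forall z, lam p X1 < z -> 0 < Ef N p M z.
Proof.
  intros Hp Hk HX z Hz. pose proof (lam_pos p X1 Hp) as Hl.
  pose proof (aa_pos p Hp) as Ha. destruct HX as [HX1 [Hr Hmin]].
  assert (Hne : forall w, lam p X1 < w -> Ef N p M w <> 0).
  { intros w Hw Hw0. pose proof (Xeq_E N p M w Hp ltac:(lra)). rewrite Hw0, Rmult_0_r in H.
    specialize (Hmin _ (Rpower_pos _ _) H).
    assert (Rpower (aa p / w) (aa p) < X1).
    { rewrite <- (X_lam p X1) by auto. apply Rlt_Rpower_l. auto. split.
      apply Rdiv_lt_0_compat; lra. unfold Rdiv. apply Rmult_lt_compat_l; auto.
      apply Rinv_lt_contravar; nra. }
    lra. }
  destruct (Rtotal_order (Ef N p M z) 0) as [Hneg|[H0|Hp0]]; auto.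
  2:{ exfalso; apply (Hne z Hz H0). }
  exfalso.
  set (q := qq p).
  assert (Hq2 : 0 < 2 - q) by (unfold q, qq; apply Rlt_Rminus; apply (Rmult_lt_reg_r (p+1)); [lra|]; unfold Rdiv; rewrite Rmult_assoc, Rinv_l; lra).
  set (c := (Rabs M + 1) * aa p / kk N p).
  assert (Hc : 0 < c). { unfold c. apply Rdiv_lt_0_compat; auto. pose proof (Rabs_pos M). nra. }
  set (big := Rmax (z + 1) (Rpower c (/ (2 - q)))).
  assert (Hbig : z < big) by (unfold big; pose proof (Rmax_l (z+1) (Rpower c (/ (2 - q)))); lra).
  assert (Hbig2 : 0 < Ef N p M big).
  { assert (Hb0 : 0 < big) by lra.
    assert (c <= Rpower big (2 - q)).
    { replace c with (Rpower (Rpower c (/ (2-q))) (2 - q)).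
      2:{ rewrite Rpower_mult. replace (/ (2-q) * (2-q)) with 1 by (field; lra). apply Rpower_1; auto. }
      apply Rle_Rpower_l. lra. split. apply Rpower_pos. apply Rmax_r. }
    unfold Ef. fold q.
    replace (big ^ 2) with (Rpower big q * Rpower big (2 - q)).
    2:{ rewrite <- Rpower_plus. replace (q + (2 - q)) with 2 by ring. apply Rpower_2; auto. }
    assert (0 < Rpower big q) by apply Rpower_pos.
    assert (kk N p / aa p * Rpower big (2 - q) >= Rabs M + 1).
    { unfold c in H. apply Rle_ge. apply (Rmult_le_reg_l (aa p / kk N p)).
      apply Rdiv_lt_0_compat; auto.
      replace (aa p / kk N p * (kk N p / aa p * Rpower big (2 - q))) with (Rpower big (2 - q)) by (field; lra).
      replace (aa p / kk N p * (Rabs M + 1)) with ((Rabs M + 1) * aa p / kk N p) by (field; lra). lra. }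
    pose proof (Rle_abs (-M)). rewrite Rabs_Ropp in H2. nra. }
  destruct (Ranalysis5.IVT_interv (Ef N p M) z big) as [w [Hw1 Hw2]]; auto.
  intros w Hw. apply Ef_cont. lra.
  apply (Hne w); auto. lra.
Qed.


Lemma H_E N p M z : 1 < p -> Hf p M z = Ef N p M z + (INR N - 1) / aa p * z^2.
Proof. intros. unfold Hf, Ef, ss, kk, aa. field. lra. Qed.

Lemma W1_lam p X1 : 1 < p -> W1 p X1 * lam p X1 = aa p.
Proof. intros. unfold lam. pose proof (Rpower_pos X1 ((p-1)/2)). unfold W1 in *. field. lra. Qed.

Lemma W1_pos p X1 : 0 < W1 p X1.
Proof. apply Rpower_pos. Qed.

Lemma H_lam N p M X1 : 1 < p -> is_X1 N p M X1 ->
  W1 p X1 * Hf p M (lam p X1) = (INR N - 1) * lam p X1.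
Proof.
  intros Hp HX. rewrite (H_E N) by auto. rewrite (E_lam N p M X1) by auto.
  pose proof (W1_lam p X1 Hp). pose proof (aa_pos p Hp).
  replace (W1 p X1) with (aa p / lam p X1).
  2:{ pose proof (lam_pos p X1 Hp). field_simplify_eq; lra. }
  pose proof (lam_pos p X1 Hp). field. lra.
Qed.

Lemma G_neg N p M X1 : 1 < p -> 0 < kk N p -> 0 < INR N - 1 -> is_X1 N p M X1 ->
  exists del, 0 < del < lam p X1 /\
    forall z, lam p X1 - del < z <= lam p X1 -> W1 p X1 * Hf p M z <= (INR N - 1) * z.
Proof.
  intros Hp Hk Hc HX. pose proof (lam_pos p X1 Hp) as Hl. pose proof (aa_pos p Hp) as Ha.
  pose proof (W1_pos p X1) as Hw. pose proof (W1_lam p X1 Hp) as Hwl.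
  pose proof (E_lam N p M X1 Hp HX) as El.
  set (l := lam p X1) in *. set (c1 := INR N - 1) in *.
  assert (Hid : forall z, W1 p X1 * Hf p M z - c1 * z =
                 W1 p X1 * (Ef N p M z - c1 / aa p * z * (l - z))).
  { intros z. rewrite (H_E N) by auto. unfold c1.
    replace (aa p) with (W1 p X1 * l) by auto. field. split; lra. }
  destruct (Ef_deriv N p M l Hl) as [d Hd].
  assert (Hd0 : 0 <= d).
  { destruct (Rlt_le_dec d 0) as [Hn|]; auto. exfalso.
    destruct (deriv_right_lt _ _ _ Hd Hn) as [e [He He']].
    specialize (He' (e/2) ltac:(lra)).
    pose proof (E_pos N p M X1 Hp Hk HX (l + e/2) ltac:(unfold l; lra)).
    rewrite El in He'. lra. }
  set (eps := c1 / aa p * l / 2).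
  assert (Heps : 0 < eps) by (unfold eps; apply Rdiv_lt_0_compat; [|lra]; apply Rmult_lt_0_compat; auto; apply Rdiv_lt_0_compat; auto).
  destruct (deriv_quot _ _ _ Hd eps Heps) as [e [He He']].
  exists (Rmin e (l/2)). split. split. unfold Rmin; destruct Rle_dec; lra.
  pose proof (Rmin_r e (l/2)); lra.
  intros z [Hz1 Hz2].
  enough (W1 p X1 * Hf p M z - c1 * z <= 0) by lra. rewrite Hid.
  enough (Ef N p M z - c1 / aa p * z * (l - z) <= 0) by nra.
  destruct (Req_dec z l) as [->|Hne].
  - rewrite El. lra.
  - set (h := l - z). assert (0 < h) by (unfold h; lra).
    assert (h < e) by (unfold h; pose proof (Rmin_l e (l/2)); lra).
    assert (h < l/2) by (unfold h; pose proof (Rmin_r e (l/2)); lra).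
    specialize (He' (-h) ltac:(lra) ltac:(rewrite Rabs_Ropp, Rabs_pos_eq; lra)).
    replace (l + - h) with z in He' by (unfold h; ring).
    rewrite El in He'.
    apply Rabs_def2 in He'. destruct He' as [A B].
    assert (Ef N p M z < eps * h).
    { assert ((Ef N p M z - 0) / - h = - (Ef N p M z / h)) by (field; lra).
      rewrite H2 in B.
      assert (Ef N p M z / h < eps) by lra.
      apply (Rmult_lt_compat_r h) in H3; auto. unfold Rdiv in H3.
      rewrite Rmult_assoc, Rinv_l in H3 by lra. lra. }
    assert (eps * h <= c1 / aa p * z * h).
    { unfold eps. apply Rmult_le_compat_r. lra.
      assert (0 < c1 / aa p) by (apply Rdiv_lt_0_compat; auto).
      unfold h in *. nra. }
    unfold h in *. lra.
Qed.


Definition xf p (u : R -> R) r := Rpower r (aa p) * u r.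
Definition Zf p (u u1 : R -> R) r := - u1 r * Rpower (u r) (- ss p).
Definition Qf (u u1 : R -> R) r := - r * u1 r / u r.
Definition om p u r := Rpower (xf p u r) ((p-1)/2).

Definition goodpt N p M (u u1 u2 : R -> R) r := 0 < r /\ is_derive u r (u1 r) /\
  is_derive u1 r (u2 r) /\ E_holds N p M r (u r) (u1 r) (u2 r).

Lemma Z_deriv N p M u u1 u2 r : 1 < p -> goodpt N p M u u1 u2 r -> 0 < u r ->
  exists dZ, is_derive (Zf p u u1) r dZ /\
    (u1 r < 0 -> r * dZ = om p u r * Hf p M (Zf p u u1 r) - (INR N - 1) * Zf p u u1 r).
Proof.
  intros Hp [Hr [Hu [Hu1 HE]]] Hpos.
  eexists. split.
  { unfold Zf, Rpower. auto_derive.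
    - repeat split; auto. exists (u2 r); auto. exists (u1 r); auto.
    - replace (Derive (fun x => u x) r) with (u1 r) by (symmetry; apply is_derive_unique; auto).
      replace (Derive (fun x => u1 x) r) with (u2 r) by (symmetry; apply is_derive_unique; auto).
      reflexivity. }
  intros Hneg.
  set (U := u r) in *. set (V := - u1 r).
  assert (HV : 0 < V) by (unfold V; lra).
  fold (Rpower U (- ss p)). set (P := Rpower U (- ss p)).
  assert (HP : 0 < P) by apply Rpower_pos.
  assert (HU1 : U = Rpower U 1) by (rewrite Rpower_1; auto).
  assert (hO : Rpower U ((p-1)/2) = / (U * P)).
  { apply (Rmult_eq_reg_r (U * P)). 2: nra.
    rewrite Rinv_l by nra. unfold P. rewrite HU1 at 2.
    rewrite <- Rmult_assoc, <- !Rpower_plus.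
    replace ((p - 1) / 2 + 1 + - ss p) with 0 by (unfold ss; field). apply Rpower_O; auto. }
  assert (hp1 : Rpower U (p - 1) = / (U^2 * P^2)).
  { assert (0 < U^2*P^2) by (apply Rmult_lt_0_compat; apply pow_lt; auto).
    apply (Rmult_eq_reg_r (U^2 * P^2)). 2: lra.
    rewrite Rinv_l by lra. unfold P. simpl. rewrite !Rmult_1_r. rewrite HU1 at 2 3.
    replace (Rpower U (p - 1) * (Rpower U 1 * Rpower U 1 * (Rpower U (- ss p) * Rpower U (- ss p))))
      with (Rpower U (p - 1 + 1 + 1 + - ss p + - ss p)) by (rewrite !Rpower_plus; ring).
    replace (p - 1 + 1 + 1 + - ss p + - ss p) with 0 by (unfold ss; field). apply Rpower_O; auto. }
  assert (hq : Rpower (V * P) (qq p) = Rpower V (qq p) * (U * P^2)).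
  { rewrite <- Rpower_mult_distr by auto. f_equal. unfold P. rewrite Rpower_mult.
    simpl. rewrite Rmult_1_r. rewrite HU1 at 2.
    rewrite <- !Rpower_plus. f_equal. unfold ss, qq. field. lra. }
  assert (hom : om p u r = r * / (U * P)).
  { unfold om, xf. rewrite <- Rpower_mult_distr by (auto; apply Rpower_pos).
    rewrite Rpower_mult. replace (aa p * ((p - 1) / 2)) with 1 by (unfold aa; field; lra).
    rewrite Rpower_1 by auto. fold U. rewrite hO. reflexivity. }
  unfold E_holds in HE. fold U in HE.
  rewrite Rabs_pos_eq in HE by lra. rewrite Rabs_left in HE by lra. fold V in HE.
  rewrite !powp_pos in HE by auto. rewrite hp1 in HE. change (2*p/(p+1)) with (qq p) in HE.
  unfold Zf. fold U. fold P. replace (- u1 r) with V by reflexivity.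
  rewrite hom. unfold Hf. rewrite hq.
  assert (Hu2 : u2 r = - ((INR N - 1) / r * u1 r) - (/ (U ^ 2 * P ^ 2) * U + M * Rpower V (qq p))) by lra.
  rewrite Hu2. replace (u1 r) with (- V) by (unfold V; ring).
  field. repeat split; lra.
Qed.

Lemma Q_deriv N p M u u1 u2 r : 1 < p -> goodpt N p M u u1 u2 r -> 0 < u r ->
  exists dQ, is_derive (Qf u u1) r dQ /\
    (Qf u u1 r = aa p -> r * dQ = Xeq N p M (xf p u r)).
Proof.
  intros Hp [Hr [Hu [Hu1 HE]]] Hpos.
  eexists. split.
  { unfold Qf. auto_derive.
    - repeat split; auto. exists (u2 r); auto. exists (u1 r); auto. lra.
    - replace (Derive (fun x => u x) r) with (u1 r) by (symmetry; apply is_derive_unique; auto).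
      replace (Derive (fun x => u1 x) r) with (u2 r) by (symmetry; apply is_derive_unique; auto).
      reflexivity. }
  intros HQ. unfold Qf in HQ. pose proof (aa_pos p Hp) as Ha.
  set (U := u r) in *.
  assert (Hu1e : u1 r = - aa p * U / r) by (apply (Rmult_eq_reg_r (-r/U)); [|apply Rmult_integral_contrapositive; split; [lra|apply Rinv_neq_0_compat; lra]]; rewrite <- HQ; field; lra).
  set (V := - u1 r).
  assert (HV : 0 < V) by (unfold V; rewrite Hu1e; replace (- (- aa p * U / r)) with (aa p * U / r) by (field; lra); apply Rdiv_lt_0_compat; nra).
  set (A := Rpower (aa p) (qq p)). set (RU := Rpower U ((p-1)/(p+1))).
  set (Rr := Rpower r (2/(p+1))).
  assert (HRr : 0 < Rr) by apply Rpower_pos. assert (HRU : 0 < RU) by apply Rpower_pos.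
  assert (HUe : U = Rpower U 1) by (rewrite Rpower_1; auto).
  assert (g1 : Rpower (xf p u r) (p-1) = r^2 * Rpower U (p-1)).
  { unfold xf. rewrite <- Rpower_mult_distr by (auto; apply Rpower_pos). rewrite Rpower_mult.
    replace (aa p * (p-1)) with 2 by (unfold aa; field; lra). rewrite Rpower_2; auto. }
  assert (g2 : Rpower (xf p u r) ((p-1)/(p+1)) = Rr * RU).
  { unfold xf. rewrite <- Rpower_mult_distr by (auto; apply Rpower_pos). rewrite Rpower_mult.
    unfold Rr, RU. f_equal. f_equal. unfold aa; field; lra. }
  assert (g3 : Rpower V (qq p) = A * U * RU * Rr / r^2).
  { replace V with (aa p * U * / r) by (unfold V; rewrite Hu1e; field; lra).
    rewrite <- !Rpower_mult_distr; try apply Rmult_lt_0_compat; auto; try apply Rinv_0_lt_compat; auto.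
    unfold A. replace (Rpower (/ r) (qq p)) with (/ Rpower r (qq p))
      by (unfold Rpower; rewrite ln_Rinv by lra; rewrite <- exp_Ropp; f_equal; ring).
    replace (Rpower U (qq p)) with (U * RU).
    2:{ unfold RU. rewrite HUe at 1. rewrite <- Rpower_plus. f_equal. unfold qq; field; lra. }
    replace (Rpower r (qq p)) with (r^2 / Rr).
    2:{ unfold Rr. rewrite <- Rpower_2 by auto.
        replace 2 with (qq p + 2/(p+1)) at 1 by (unfold qq; field; lra).
        rewrite Rpower_plus. field. apply Rgt_not_eq, Rpower_pos. }
    1: (field; assert (0 < Rpower r (qq p)) by apply Rpower_pos; split; lra).
    all: try lra. }
  unfold Xeq. rewrite !powp_pos; try (apply Rmult_lt_0_compat; auto; apply Rpower_pos); auto.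
  rewrite g1, g2. change (2*p/(p+1)) with (qq p). fold A.
  unfold E_holds in HE. fold U in HE. rewrite Rabs_pos_eq in HE by lra.
  rewrite Rabs_left in HE by (unfold V in HV; lra).
  fold V in HE. rewrite !powp_pos in HE by auto. change (2*p/(p+1)) with (qq p) in HE.
  rewrite g3 in HE.
  assert (Hu2 : u2 r = - ((INR N - 1) / r * u1 r) - (Rpower U (p-1) * U + M * (A * U * RU * Rr / r ^ 2))) by lra.
  rewrite Hu2, Hu1e. change (Rpower (2/(p-1)) (qq p)) with A. unfold Kc, aa. field. lra.
Qed.

Lemma x_deriv p u u1 r : 1 < p -> 0 < r -> is_derive u r (u1 r) ->
  is_derive (xf p u) r (Rpower r (aa p) * (aa p * u r + r * u1 r) / r).
Proof.
  intros Hp Hr Hu. unfold xf, Rpower. auto_derive.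
  - repeat split; auto. exists (u1 r); auto.
  - replace (Derive (fun x => u x) r) with (u1 r) by (symmetry; apply is_derive_unique; auto).
    field. lra.
Qed.

Lemma x_deriv_pos p u u1 r : 1 < p -> 0 < r -> 0 < u r -> Qf u u1 r < aa p ->
  0 < Rpower r (aa p) * (aa p * u r + r * u1 r) / r.
Proof.
  intros Hp Hr Hu HQ. unfold Qf in HQ. apply Rdiv_lt_0_compat; auto.
  apply Rmult_lt_0_compat. apply Rpower_pos.
  assert (- r * u1 r < aa p * u r).
  { apply (Rmult_lt_reg_r (/ u r)). apply Rinv_0_lt_compat; auto.
    rewrite Rinv_r_simpl_l by lra. auto. }
  lra.
Qed.

Lemma Z_om p u u1 r : 1 < p -> 0 < r -> 0 < u r -> Zf p u u1 r * om p u r = Qf u u1 r.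
Proof.
  intros Hp Hr Hu. unfold Zf, om, Qf, xf.
  rewrite <- Rpower_mult_distr by (auto; apply Rpower_pos). rewrite Rpower_mult.
  replace (aa p * ((p - 1) / 2)) with 1 by (unfold aa; field; lra). rewrite Rpower_1 by auto.
  replace (- u1 r * Rpower (u r) (- ss p) * (r * Rpower (u r) ((p - 1) / 2)))
    with (- u1 r * r * (Rpower (u r) (- ss p + (p-1)/2))) by (rewrite Rpower_plus; ring).
  replace (- ss p + (p-1)/2) with (- (1)) by (unfold ss; field).
  rewrite Rpower_Ropp, Rpower_1 by auto. field. lra.
Qed.

Lemma om_lt p u X1 r : 1 < p -> 0 < xf p u r -> xf p u r < X1 -> om p u r < W1 p X1.
Proof. intros. unfold om, W1. apply Rlt_Rpower_l. lra. lra. Qed.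

Lemma om_pos p u r : 0 < om p u r.
Proof. apply Rpower_pos. Qed.

Lemma xf_pos p u r : 0 < u r -> 0 < xf p u r.
Proof. intros. unfold xf. apply Rmult_lt_0_compat; auto. apply Rpower_pos. Qed.

Lemma cont_of_derive (f : R -> R) r d : is_derive f r d -> continuous f r.
Proof. intros. apply (ex_derive_continuous f). exists d; auto. Qed.

Lemma Zf_cont N p M u u1 u2 r : 1 < p -> goodpt N p M u u1 u2 r -> 0 < u r -> continuous (Zf p u u1) r.
Proof. intros. destruct (Z_deriv N p M u u1 u2 r H H0 H1) as [d [Hd _]]. eapply cont_of_derive; eauto. Qed.

Lemma Qf_cont N p M u u1 u2 r : 1 < p -> goodpt N p M u u1 u2 r -> 0 < u r -> continuous (Qf u u1) r.
Proof. intros. destruct (Q_deriv N p M u u1 u2 r H H0 H1) as [d [Hd _]]. eapply cont_of_derive; eauto. Qed.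

Lemma xf_cont N p M u u1 u2 r : 1 < p -> goodpt N p M u u1 u2 r -> continuous (xf p u) r.
Proof. intros Hp [Hr [Hu _]]. eapply cont_of_derive. apply x_deriv; eauto. Qed.

Lemma u_cont N p M u u1 u2 r : goodpt N p M u u1 u2 r -> continuous u r.
Proof. intros [Hr [Hu _]]. eapply cont_of_derive; eauto. Qed.


Lemma Xeq_pos N p M X1 x : 1 < p -> 0 < kk N p -> is_X1 N p M X1 -> 0 < x < X1 -> 0 < Xeq N p M x.
Proof.
  intros Hp Hk HX [Hx1 Hx2]. pose proof (aa_pos p Hp) as Ha.
  set (w := Rpower x ((p-1)/2)). assert (Hw : 0 < w) by apply Rpower_pos.
  set (z := aa p / w). assert (Hz : 0 < z) by (apply Rdiv_lt_0_compat; auto).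
  assert (Hxz : Rpower (aa p / z) (aa p) = x).
  { unfold z. replace (aa p / (aa p / w)) with w by (field; lra). unfold w.
    rewrite Rpower_mult. replace ((p - 1) / 2 * aa p) with 1 by (unfold aa; field; lra).
    apply Rpower_1; auto. }
  pose proof (Xeq_E N p M z Hp Hz) as He. rewrite Hxz in He. rewrite He.
  apply Rmult_lt_0_compat. apply pow_lt. apply Rdiv_lt_0_compat; auto.
  apply (E_pos N p M X1); auto.
  unfold z, lam. unfold Rdiv. apply Rmult_lt_compat_l; auto. apply Rinv_lt_contravar.
  apply Rmult_lt_0_compat; auto; apply W1_pos. unfold w, W1. apply Rlt_Rpower_l; lra.
Qed.

Lemma Z_neg N p M X1 u u1 u2 r del : 1 < p -> 0 < INR N - 1 -> is_X1 N p M X1 ->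
  0 < del < lam p X1 ->
  (forall z, lam p X1 - del < z <= lam p X1 -> W1 p X1 * Hf p M z <= (INR N - 1) * z) ->
  goodpt N p M u u1 u2 r -> 0 < u r -> xf p u r < X1 ->
  lam p X1 - del < Zf p u u1 r <= lam p X1 ->
  exists d, is_derive (Zf p u u1) r d /\ d < 0.
Proof.
  intros Hp Hc HX Hd HG Hg Hu Hx HZ.
  destruct (Z_deriv N p M u u1 u2 r Hp Hg Hu) as [d [Hd1 Hd2]]. exists d. split; auto.
  assert (Hu1 : u1 r < 0).
  { unfold Zf in HZ. pose proof (Rpower_pos (u r) (- ss p)). nra. }
  specialize (Hd2 Hu1). destruct Hg as [Hr _].
  assert (Hom : om p u r < W1 p X1) by (apply om_lt; auto; apply xf_pos; auto).
  pose proof (om_pos p u r). specialize (HG _ HZ).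
  assert (r * d < 0).
  { rewrite Hd2. destruct (Rle_lt_dec (Hf p M (Zf p u u1 r)) 0).
    - assert (om p u r * Hf p M (Zf p u u1 r) <= 0) by nra. nra.
    - assert (om p u r * Hf p M (Zf p u u1 r) < W1 p X1 * Hf p M (Zf p u u1 r)) by nra. lra. }
  nra.
Qed.

Lemma Q_pos N p M X1 u u1 u2 r : 1 < p -> 0 < kk N p -> is_X1 N p M X1 ->
  goodpt N p M u u1 u2 r -> 0 < u r -> xf p u r < X1 -> Qf u u1 r = aa p ->
  exists d, is_derive (Qf u u1) r d /\ 0 < d.
Proof.
  intros Hp Hk HX Hg Hu Hx HQ.
  destruct (Q_deriv N p M u u1 u2 r Hp Hg Hu) as [d [Hd1 Hd2]]. exists d. split; auto.
  specialize (Hd2 HQ). destruct Hg as [Hr _].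
  pose proof (Xeq_pos N p M X1 (xf p u r) Hp Hk HX (conj (xf_pos p u r Hu) Hx)). nra.
Qed.


Lemma near_pos (g : R -> R) x c : continuous g x -> c < g x ->
  exists e, 0 < e /\ forall y, Rabs (y - x) < e -> c < g y.
Proof.
  intros Hc Hx. destruct (cont_nbhd g x Hc (g x - c)) as [e [He H]]. lra.
  exists e; split; auto. intros y Hy. specialize (H y Hy). apply Rabs_def2 in H. lra.
Qed.

Lemma part2 N p M X1 u u1 u2 r1 : 1 < p -> 0 < kk N p -> 0 < INR N - 1 -> is_X1 N p M X1 ->
  (forall r, 0 < r <= r1 -> goodpt N p M u u1 u2 r) ->
  (forall R c, 0 < R -> 0 < c -> exists lo, 0 < lo < R /\ 0 < u lo /\ Zf p u u1 lo < c) ->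
  0 < r1 -> 0 < u r1 -> Qf u u1 r1 = aa p -> xf p u r1 < X1 -> False.
Proof.
  intros Hp Hk Hc HX Hg Hsmall Hr1 Hu1 HQ1 Hx1.
  pose proof (lam_pos p X1 Hp) as Hl. pose proof (aa_pos p Hp) as Ha.
  destruct (G_neg N p M X1 Hp Hk Hc HX) as [del [Hdel HG]].
  assert (Hg1 := Hg r1 ltac:(lra)).
  destruct (Q_pos N p M X1 u u1 u2 r1 Hp Hk HX Hg1 Hu1 Hx1 HQ1) as [dq [Hdq Hdq0]].
  destruct (deriv_left_lt _ _ _ Hdq Hdq0) as [e1 [He1 HQl]].
  assert (HZ1 : lam p X1 < Zf p u u1 r1).
  { pose proof (Z_om p u u1 r1 Hp Hr1 Hu1) as Hzo. rewrite HQ1 in Hzo.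
    pose proof (om_lt p u X1 r1 Hp (xf_pos p u r1 Hu1) Hx1). pose proof (om_pos p u r1).
    pose proof (W1_lam p X1 Hp). pose proof (W1_pos p X1). nra. }
  destruct (near_pos _ _ _ (Zf_cont N p M u u1 u2 r1 Hp Hg1 Hu1) HZ1) as [e2 [He2 HZn]].
  destruct (near_pos _ _ _ (u_cont N p M u u1 u2 r1 Hg1) Hu1) as [e3 [He3 Hun]].
  destruct (near_pos (fun r => - xf p u r) r1 (- X1)) as [e4 [He4 Hxn]].
  { apply (continuous_opp (xf p u)). apply (xf_cont N p M u u1 u2); auto. }
  { lra. }
  set (h := Rmin (Rmin e1 e2) (Rmin (Rmin e3 e4) r1) / 2).
  assert (Hh : 0 < h /\ h < e1 /\ h < e2 /\ h < e3 /\ h < e4 /\ h < r1).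
  { unfold h, Rmin. repeat destruct Rle_dec; lra. }
  set (r2 := r1 - h).
  assert (Hr2 : 0 < r2 < r1) by (unfold r2; lra).
  assert (HQ2 : Qf u u1 r2 < aa p) by (rewrite <- HQ1; apply HQl; lra).
  assert (HZ2 : lam p X1 < Zf p u u1 r2) by (apply HZn; unfold r2; rewrite Rabs_left; lra).
  assert (Hu2 : 0 < u r2) by (apply Hun; unfold r2; rewrite Rabs_left; lra).
  assert (Hx2 : xf p u r2 < X1) by (enough (- X1 < - xf p u r2) by lra; apply Hxn; unfold r2; rewrite Rabs_left; lra).
  destruct (Hsmall r2 (lam p X1)) as [lo [Hlo [Hulo HZlo]]]; try lra.
  destruct (last_cross u lo r2 0) as [ru [Hru [Hru1 Hru2]]]; try lra.
  { intros r Hr. apply (u_cont N p M u u1 u2). apply Hg. lra. }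
  destruct (last_cross (Zf p u u1) ru r2 (lam p X1)) as [rz [Hrz [Hrz1 Hrz2]]]; try lra.
  { intros r Hr. apply (Zf_cont N p M u u1 u2); [auto| apply Hg; lra | apply Hru1; lra]. }
  destruct (last_cross (fun r => - Qf u u1 r) ru r2 (- aa p)) as [rq [Hrq [Hrq1 Hrq2]]]; try lra.
  { intros r Hr. apply (continuous_opp (Qf u u1)). apply (Qf_cont N p M u u1 u2); [auto| apply Hg; lra | apply Hru1; lra]. }
  set (rs := Rmax rz rq).
  assert (Hrs : ru <= rs < r2 /\ (rs = rz \/ rs = rq)) by (unfold rs, Rmax; destruct Rle_dec; lra).
  assert (Hin : forall r, rs < r <= r2 -> 0 < u r /\ lam p X1 < Zf p u u1 r /\ Qf u u1 r < aa p).
  { intros r Hr. split. apply Hru1; lra. split. apply Hrz1. unfold rs in Hr; pose proof (Rmax_l rz rq); lra.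
    enough (- aa p < - Qf u u1 r) by lra. apply Hrq1. unfold rs in Hr; pose proof (Rmax_r rz rq); lra. }
  assert (Hneg : forall r, rs < r <= r2 -> u1 r < 0).
  { intros r Hr. destruct (Hin r Hr) as [_ [HZ _]]. unfold Zf in HZ.
    pose proof (Rpower_pos (u r) (- ss p)). nra. }
  assert (Hrs0 : 0 < rs) by lra.
  assert (Hurs : u r2 < u rs).
  { apply (strict_decr u u1 rs r2). lra.
    intros y Hy. split. destruct (Hg y ltac:(lra)) as [_ [Hd _]]; auto. apply Hneg; lra.
    intros y Hy. apply (u_cont N p M u u1 u2). apply Hg; lra. }
  assert (Hxrs : xf p u rs < xf p u r2).
  { apply (strict_incr (xf p u) (fun r => Rpower r (aa p) * (aa p * u r + r * u1 r) / r) rs r2). lra.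
    intros y Hy. destruct (Hin y ltac:(lra)) as [Hy1 [_ Hy3]]. split.
    apply x_deriv; auto. lra. destruct (Hg y ltac:(lra)) as [_ [Hd _]]; auto.
    apply x_deriv_pos; auto; lra.
    intros y Hy. apply (xf_cont N p M u u1 u2); auto. apply Hg; lra. }
  assert (Hgrs := Hg rs ltac:(lra)).
  assert (HZrs : lam p X1 <= Zf p u u1 rs).
  { apply (right_limit_ge _ _ _ (r2 - rs)). apply (Zf_cont N p M u u1 u2); auto. lra. lra.
    intros r Hr. apply Hin; lra. }
  assert (HQrs : Qf u u1 rs <= aa p).
  { enough (- aa p <= - Qf u u1 rs) by lra.
    apply (right_limit_ge (fun r => - Qf u u1 r) _ _ (r2 - rs)).
    apply (continuous_opp (Qf u u1)). apply (Qf_cont N p M u u1 u2); auto. lra. lra.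
    intros r Hr. destruct (Hin r ltac:(lra)) as [_ [_ H]]. lra. }
  assert (HZne : Zf p u u1 rs <> lam p X1).
  { intros Heq. destruct (Z_neg N p M X1 u u1 u2 rs del Hp Hc HX Hdel HG Hgrs ltac:(lra) ltac:(lra) ltac:(lra))
      as [d [Hd Hd0]].
    destruct (deriv_right_lt _ _ _ Hd Hd0) as [e [He He']].
    set (k := Rmin e (r2 - rs) / 2).
    assert (0 < k < e /\ k <= r2 - rs) by (unfold k, Rmin; destruct Rle_dec; lra).
    specialize (He' k ltac:(lra)). destruct (Hin (rs + k) ltac:(lra)) as [_ [H' _]]. lra. }
  assert (HQne : Qf u u1 rs <> aa p).
  { intros Heq. destruct (Q_pos N p M X1 u u1 u2 rs Hp Hk HX Hgrs ltac:(lra) ltac:(lra) Heq)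
      as [d [Hd Hd0]].
    destruct (deriv_right_gt _ _ _ Hd Hd0) as [e [He He']].
    set (k := Rmin e (r2 - rs) / 2).
    assert (0 < k < e /\ k <= r2 - rs) by (unfold k, Rmin; destruct Rle_dec; lra).
    specialize (He' k ltac:(lra)). destruct (Hin (rs + k) ltac:(lra)) as [_ [_ H']]. lra. }
  assert (Hrsru : rs = ru).
  { destruct Hrs as [_ [E|E]].
    - destruct Hrz2 as [H|H]; [lra|]. exfalso. apply HZne. rewrite E. auto.
    - destruct Hrq2 as [H|H]; [lra|]. exfalso. apply HQne. rewrite E. lra. }
  destruct Hru2 as [H|H].
  - assert (rs = lo) by lra. subst rs. rewrite H0 in HZrs. lra.
  - rewrite <- Hrsru in H. lra.
Qed.


Lemma Y_eq p u u1 r : 1 < p -> 0 < r -> 0 < u r ->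
  - (r * Rpower r (aa p) * u1 r) = Zf p u u1 r * Rpower (xf p u r) (ss p).
Proof.
  intros Hp Hr Hu. unfold Zf, xf.
  rewrite <- Rpower_mult_distr by (auto; apply Rpower_pos). rewrite Rpower_mult.
  replace (- u1 r * Rpower (u r) (- ss p) * (Rpower r (aa p * ss p) * Rpower (u r) (ss p)))
    with (- u1 r * Rpower r (aa p * ss p) * Rpower (u r) (- ss p + ss p)) by (rewrite Rpower_plus; ring).
  replace (- ss p + ss p) with 0 by ring. rewrite Rpower_O by auto.
  replace (aa p * ss p) with (1 + aa p) by (unfold aa, ss; field; lra).
  rewrite Rpower_plus, Rpower_1 by auto. ring.
Qed.

Lemma lam_S p X1 : 1 < p -> 0 < X1 -> lam p X1 * Rpower X1 (ss p) = aa p * X1.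
Proof.
  intros Hp HX. unfold lam, W1. rewrite <- (Rpower_1 X1) at 3 by auto.
  replace (ss p) with ((p-1)/2 + 1) by (unfold ss; field). rewrite Rpower_plus.
  pose proof (Rpower_pos X1 ((p-1)/2)). field. lra.
Qed.

Lemma part1 N p M X1 u u1 u2 : 1 < p -> 0 < kk N p -> 0 < INR N - 1 -> is_X1 N p M X1 ->
  (forall r, 0 < r -> goodpt N p M u u1 u2 r) ->
  (forall R c, 0 < R -> 0 < c -> exists lo, 0 < lo < R /\ 0 < u lo /\ Zf p u u1 lo < c) ->
  (forall r, 0 < r -> 0 < u r /\ xf p u r < X1) ->
  (forall eps, 0 < eps -> exists T, forall r, T < r ->
      Rabs (- (r * Rpower r (aa p) * u1 r) - aa p * X1) < eps) -> False.
Proof.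
  intros Hp Hk Hc HX Hg Hsmall Hpos Hlim.
  pose proof (lam_pos p X1 Hp) as Hl. pose proof (aa_pos p Hp) as Ha.
  destruct HX as [HX1 HXr]. assert (HX : is_X1 N p M X1) by (split; auto).
  destruct (G_neg N p M X1 Hp Hk Hc HX) as [del [Hdel HG]].
  assert (Hbar : forall r, 0 < r -> Zf p u u1 r <= lam p X1).
  { intros r1 Hr1. destruct (Rle_lt_dec (Zf p u u1 r1) (lam p X1)) as [|HZ1]; auto. exfalso.
    destruct (Hsmall r1 (lam p X1)) as [lo [Hlo [Hulo HZlo]]]; try lra.
    destruct (last_cross (Zf p u u1) lo r1 (lam p X1)) as [rs [Hrs [Hrs1 Hrs2]]]; try lra.
    { intros r Hr. apply (Zf_cont N p M u u1 u2); [auto| apply Hg; lra | apply Hpos; lra]. }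
    assert (Hgrs := Hg rs ltac:(lra)). destruct (Hpos rs ltac:(lra)) as [Hurs Hxrs].
    assert (HZrs : lam p X1 <= Zf p u u1 rs).
    { apply (right_limit_ge _ _ _ (r1 - rs)). apply (Zf_cont N p M u u1 u2); auto. lra.
      intros r Hr. apply Hrs1; lra. }
    assert (Heq : Zf p u u1 rs = lam p X1) by (destruct Hrs2 as [E|E]; [subst rs; lra | auto]).
    destruct (Z_neg N p M X1 u u1 u2 rs del Hp Hc HX Hdel HG Hgrs Hurs Hxrs ltac:(lra))
      as [d [Hd Hd0]].
    destruct (deriv_right_lt _ _ _ Hd Hd0) as [e [He He']].
    set (k := Rmin e (r1 - rs) / 2).
    assert (0 < k < e /\ k <= r1 - rs) by (unfold k, Rmin; destruct Rle_dec; lra).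
    specialize (He' k ltac:(lra)). specialize (Hrs1 (rs + k) ltac:(lra)). lra. }
  set (S1 := Rpower X1 (ss p)). assert (HS1 : 0 < S1) by apply Rpower_pos.
  pose proof (lam_S p X1 Hp HX1) as HlS. fold S1 in HlS.
  assert (Hxs : forall r, 0 < r -> 0 < Rpower (xf p u r) (ss p) < S1).
  { intros r Hr. destruct (Hpos r Hr). split. apply Rpower_pos. unfold S1.
    apply Rlt_Rpower_l. unfold ss; lra. split; auto. apply xf_pos; auto. }
  destruct (Hlim (del * S1)) as [T1 HT1]. nra.
  assert (Hzone : forall r, Rmax T1 0 < r -> lam p X1 - del < Zf p u u1 r <= lam p X1).
  { intros r Hr. assert (0 < r) by (pose proof (Rmax_r T1 0); lra).
    assert (T1 < r) by (pose proof (Rmax_l T1 0); lra).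
    split; [|apply Hbar; auto].
    specialize (HT1 r H0). apply Rabs_def2 in HT1.
    destruct (Hpos r H) as [Hu Hx]. rewrite (Y_eq p u u1 r Hp H Hu) in HT1.
    specialize (Hxs r H). set (Z := Zf p u u1 r) in *. set (xs := Rpower (xf p u r) (ss p)) in *.
    assert (Z * xs > (lam p X1 - del) * S1) by lra.
    destruct (Rle_lt_dec Z 0). nra.
    assert ((lam p X1 - del) * xs < (lam p X1 - del) * S1) by (apply Rmult_lt_compat_l; lra).
    nra. }
  assert (Hdec : forall a b, Rmax T1 0 < a -> a < b -> Zf p u u1 b < Zf p u u1 a).
  { intros a b Ha' Hab. assert (0 < a) by (pose proof (Rmax_r T1 0); lra).
    apply (strict_decr (Zf p u u1) (Derive (Zf p u u1))); auto.
    - intros y Hy. destruct (Hpos y ltac:(lra)) as [Huy Hxy].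
      destruct (Z_neg N p M X1 u u1 u2 y del Hp Hc HX Hdel HG (Hg y ltac:(lra)) Huy Hxy (Hzone y ltac:(lra)))
        as [d [Hd Hd0]].
      rewrite (is_derive_unique _ _ _ Hd). auto.
    - intros y Hy. destruct (Hpos y ltac:(lra)) as [Huy Hxy].
      apply (Zf_cont N p M u u1 u2); [auto | apply Hg; lra | auto]. }
  set (ra := Rmax T1 0 + 1). set (rb := ra + 1).
  assert (Hra : Rmax T1 0 < ra) by (unfold ra; lra).
  assert (Hzb := Hdec ra rb Hra ltac:(unfold rb; lra)).
  assert (Hza := Hzone ra Hra).
  assert (Hzb' := Hzone rb ltac:(unfold rb; lra)).
  set (zb := Zf p u u1 rb) in *.
  destruct (Hlim ((lam p X1 - zb) * S1)) as [T2 HT2]. nra.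
  set (r := Rmax T2 rb + 1).
  assert (HrT2 : T2 < r) by (unfold r; pose proof (Rmax_l T2 rb); lra).
  assert (Hrb : rb < r) by (unfold r; pose proof (Rmax_r T2 rb); lra).
  assert (Hr0 : 0 < r) by (pose proof (Rmax_r T1 0); assert (0 < rb) by (unfold rb, ra; lra); lra).
  specialize (HT2 r HrT2). apply Rabs_def2 in HT2.
  destruct (Hpos r Hr0) as [Hu Hx]. rewrite (Y_eq p u u1 r Hp Hr0 Hu) in HT2.
  assert (Hzr := Hdec rb r ltac:(unfold rb; lra) Hrb).
  assert (Hzr' := Hzone r ltac:(unfold rb in *; lra)).
  specialize (Hxs r Hr0).
  set (Z := Zf p u u1 r) in *. set (xs := Rpower (xf p u r) (ss p)) in *. unfold zb in *.
  assert (Z * xs < Zf p u u1 rb * S1).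
  { apply Rle_lt_trans with (Zf p u u1 rb * xs). apply Rmult_le_compat_r; lra.
    apply Rmult_lt_compat_l; lra. }
  lra.
Qed.


Lemma traj_x_eq p u t : traj_x p u t = xf p u (exp t).
Proof. unfold traj_x, xf. rewrite powp_pos by apply exp_pos. reflexivity. Qed.

Lemma traj_y_eq p u u1 t : 1 < p -> is_derive u (exp t) (u1 (exp t)) ->
  traj_y p u t = - (exp t * Rpower (exp t) (aa p) * u1 (exp t)).
Proof.
  intros Hp Hd. unfold traj_y. rewrite powp_pos by apply exp_pos.
  rewrite (is_derive_unique _ _ _ Hd).
  replace ((p+1)/(p-1)) with (1 + aa p) by (unfold aa; field; lra).
  rewrite Rpower_plus, Rpower_1 by apply exp_pos. ring.
Qed.

Lemma params N p : ((3 <= N)%nat /\ 1 < p /\ p < INR N / (INR N - 2) \/ N = 2%nat /\ 1 < p) ->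
  1 < p /\ 0 < kk N p /\ 0 < INR N - 1.
Proof.
  intros [[HN [Hp Hp2]] | [HN Hp]].
  - apply le_INR in HN. simpl in HN. split; auto. split.
    + unfold kk. apply Rdiv_lt_0_compat; [|lra].
      assert (p * (INR N - 2) < INR N).
      { apply (Rmult_lt_compat_r (INR N - 2)) in Hp2; [|lra].
        unfold Rdiv in Hp2. rewrite Rmult_assoc, Rinv_l in Hp2 by lra. lra. }
      lra.
    + lra.
  - subst. simpl. split; auto. split. unfold kk. simpl. apply Rdiv_lt_0_compat; lra. lra.
Qed.

Lemma small_lemma p u u1 l2 : 1 < p -> 0 < u 0 -> rderive u 0 (u1 0) -> rderive u1 0 l2 ->
  u1 0 = 0 -> forall R c, 0 < R -> 0 < c ->
  exists lo, 0 < lo < R /\ 0 < u lo /\ Zf p u u1 lo < c.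
Proof.
  intros Hp Hu0 Hd1 Hd2 H10 R c HR Hc.
  set (A := Rpower (u 0 / 2) (ss p)). assert (HA : 0 < A) by apply Rpower_pos.
  destruct (rderive_cont u _ Hd1 (u 0 / 2)) as [d1 [Hd1p H1]]. lra.
  destruct (rderive_cont u1 _ Hd2 (c * A)) as [d2 [Hd2p H2]]. nra.
  set (lo := Rmin (Rmin d1 d2) R / 2).
  assert (Hlo : 0 < lo /\ lo < d1 /\ lo < d2 /\ lo < R) by (unfold lo, Rmin; repeat destruct Rle_dec; lra).
  exists lo. split. lra.
  specialize (H1 lo ltac:(lra)). specialize (H2 lo ltac:(lra)). rewrite H10, Rminus_0_r in H2.
  apply Rabs_def2 in H1. assert (Hul : u 0 / 2 < u lo) by lra. split. lra.
  unfold Zf. rewrite Rpower_Ropp.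
  assert (A <= Rpower (u lo) (ss p)).
  { unfold A. apply Rle_Rpower_l. unfold ss; lra. lra. }
  assert (Hb : - u1 lo <= Rabs (u1 lo)) by (rewrite <- Rabs_Ropp; apply Rle_abs).
  assert (0 < Rpower (u lo) (ss p)) by apply Rpower_pos.
  apply Rle_lt_trans with (Rabs (u1 lo) / Rpower (u lo) (ss p)).
  { unfold Rdiv. apply Rmult_le_compat_r. left; apply Rinv_0_lt_compat; auto. auto. }
  apply (Rmult_lt_reg_r (Rpower (u lo) (ss p))); auto.
  unfold Rdiv. rewrite Rmult_assoc, Rinv_l by lra. rewrite Rmult_1_r. nra.
Qed.

Theorem lemma4p6 (N : nat) (p M u0 X1 : R) (u : R -> R) (r0 : Rbar) :
  ((3 <= N)%nat /\ 1 < p /\ p < INR N / (INR N - 2) \/ N = 2%nat /\ 1 < p) ->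
  M <= - mu_star N p ->
  is_X1 N p M X1 ->
  regular_solution N p M u0 u r0 ->
  (* (i) no convergence to P_{1,M} as t -> oo with x increasing *)
  ~ (r0 = p_infty /\
     is_lim (traj_x p u) p_infty X1 /\
     is_lim (traj_y p u) p_infty (2 / (p - 1) * X1) /\
     (forall t s, t < s -> traj_x p u t < traj_x p u s)) /\
  (* (ii) no intersection with the half-line y = 2/(p-1) x strictly between
     (0,0) and P_{1,M} *)
  ~ (exists t, Rbar_lt (exp t) r0 /\
       traj_y p u t = 2 / (p - 1) * traj_x p u t /\
       0 < traj_x p u t < X1).
Proof.
  intros HN _ HX [Hu0 [Hu00 [[_ [u1 [u2 [Hall [Hd1 [Hd2 [_ H10]]]]]]] _]]].
  destruct (params N p HN) as [Hp [Hk Hc]].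
  pose proof (aa_pos p Hp) as Ha.
  assert (Hsmall := small_lemma p u u1 (u2 0) Hp ltac:(lra) Hd1 Hd2 H10).
  assert (Hgood : forall r, 0 < r -> Rbar_lt r r0 -> goodpt N p M u u1 u2 r).
  { intros r Hr Hr0. destruct (Hall r Hr Hr0) as [A [B [_ D]]]. unfold goodpt. auto. }
  split.
  - intros [Hr0 [Hlx [Hly Hinc]]]. subst r0.
    assert (Hg : forall r, 0 < r -> goodpt N p M u u1 u2 r) by (intros; apply Hgood; simpl; auto).
    assert (Hxlt : forall r, 0 < r -> xf p u r < X1).
    { intros r Hr. destruct (Rlt_le_dec (xf p u r) X1) as [|Hge]; auto. exfalso.
      set (t := ln r). assert (Hxt : traj_x p u t = xf p u r) by (unfold t; rewrite traj_x_eq, exp_ln; auto).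
      assert (H1 := Hinc t (t+1) ltac:(lra)).
      apply is_lim_spec in Hlx. simpl in Hlx.
      destruct (Hlx (mkposreal (traj_x p u (t+1) - X1) ltac:(lra))) as [Mm HM].
      set (t' := Rmax Mm (t+1) + 1).
      assert (Mm < t') by (unfold t'; pose proof (Rmax_l Mm (t+1)); lra).
      assert (t + 1 < t') by (unfold t'; pose proof (Rmax_r Mm (t+1)); lra).
      specialize (HM t' H). simpl in HM. specialize (Hinc _ _ H0).
      apply Rabs_def2 in HM. lra. }
    assert (Hupos : forall r, 0 < r -> 0 < u r).
    { intros r Hr. destruct (Hsmall r 1 Hr Rlt_0_1) as [lo [Hlo [Hulo _]]].
      assert (traj_x p u (ln lo) < traj_x p u (ln r)) by (apply Hinc; apply ln_increasing; lra).
      rewrite !traj_x_eq, !exp_ln in H by lra.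
      pose proof (xf_pos p u lo Hulo). unfold xf in H.
      pose proof (Rpower_pos r (aa p)). unfold xf in H0. nra. }
    apply (part1 N p M X1 u u1 u2 Hp Hk Hc HX Hg Hsmall).
    + intros r Hr. split; auto.
    + intros eps Heps. apply is_lim_spec in Hly. simpl in Hly.
      destruct (Hly (mkposreal eps Heps)) as [Mm HM]. exists (exp Mm).
      intros r Hr. assert (Hr0 : 0 < r) by (pose proof (exp_pos Mm); lra).
      assert (Mm < ln r) by (rewrite <- (ln_exp Mm); apply ln_increasing; auto; apply exp_pos).
      specialize (HM _ H). simpl in HM.
      rewrite (traj_y_eq p u u1) in HM by (auto; rewrite exp_ln by auto; destruct (Hg r Hr0) as [_ [A _]]; auto).
      rewrite exp_ln in HM by auto. exact HM.
  - intros [t [Ht [Hy [Hx1 Hx2]]]].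
    set (r1 := exp t). assert (Hr1 : 0 < r1) by apply exp_pos.
    assert (Hg1 := Hgood r1 Hr1 Ht).
    rewrite traj_x_eq in Hx1, Hx2, Hy. fold r1 in Hx1, Hx2, Hy.
    rewrite (traj_y_eq p u u1) in Hy by (auto; destruct Hg1 as [_ [A _]]; auto). fold r1 in Hy.
    assert (Hu1 : 0 < u r1).
    { unfold xf in Hx1. pose proof (Rpower_pos r1 (aa p)). nra. }
    apply (part2 N p M X1 u u1 u2 r1 Hp Hk Hc HX); auto.
    + intros r Hr. apply Hgood. lra. destruct r0 as [r0x| |]; simpl in Ht |- *; [unfold r1 in Hr; lra|auto|contradiction].
    + unfold Qf. unfold xf in Hy. change (2/(p-1)) with (aa p) in Hy.
      pose proof (Rpower_pos r1 (aa p)).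
      assert (- r1 * u1 r1 = aa p * u r1).
      { apply (Rmult_eq_reg_l (Rpower r1 (aa p))); [|lra]. lra. }
      rewrite H0. field. lra.
Qed.
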